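(* The product of any collection of mild mixing systems is mild mixing: if $(X_i,T_i)$, $i\in I$, are mild mixing, then the product system $(\prod_{i\in I}X_i,\prod_{i\in I}T_i)$ is mild mixing.
   Context: A dynamical system $(X,T)$ consists of a compact metric space $X$ and a homeomorphism $T:X\to X$. $\mathbb N=\{1,2,\dots\}$; for $U,V\subset X$, $N(U,V)=\{n\in\mathbb N:T^n(U)\cap V\ne\emptyset\}$. For a finite $F\subset\mathbb Z$, $\sigma_F$ is the sum of its elements ($\sigma_\emptyset=0$); for $A\subset\mathbb Z$, $IP(A)=\{\sigma_F:F\subset A \text{ finite}\}$ and $SIP(A)=\{a-b:a,b\in IP(A)\}$. A set $B\subset\mathbb N$ is an SIP set if $SIP(A)\cap\mathbb N\subset B$ for some infinite $A\subset\mathbb N$. A system $(X,T)$ is mild mixing if for all nonempty open $U,V\subset X$, the set $N(U,V)$ has nonempty intersection with every SIP set. *)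

(* Defs.v *)
From HB Require Import structures.
From mathcomp Require Import all_boot all_order all_algebra.
From mathcomp Require Import all_classical all_reals all_analysis.
Set Implicit Arguments. Unset Strict Implicit. Unset Printing Implicit Defensive.
Import Order.TTheory GRing.Theory Num.Theory.
Local Open Scope classical_set_scope.
Local Open Scope ring_scope.

Definition homeomorphism (X : topologicalType) (T : X -> X) : Prop :=
  exists S : X -> X, [/\ cancel T S, cancel S T, continuous T & continuous S].

Definition return_times (X : Type) (T : X -> X) (U V : set X) : set nat :=
  [set n | (0 < n)%N /\ (iter n T @` U) `&` V !=set0].

Definition IP (A : set nat) : set int :=
  [set z | exists F : seq nat, [/\ uniq F, (forall a, a \in F -> A a) &
                                   z = (\sum_(a <- F) a)%:Z]].

Definition SIP (A : set nat) : set int :=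
  [set z | exists a b, [/\ IP A a, IP A b & z = a - b]].

Definition SIP_set (B : set nat) : Prop :=
  B `<=` [set n | (0 < n)%N] /\
  exists A : set nat, [/\ infinite_set A, A `<=` [set n | (0 < n)%N] &
    forall n : nat, (0 < n)%N -> SIP A n%:Z -> B n].

Definition mild_mixing (X : topologicalType) (T : X -> X) : Prop :=
  forall U V : set X, open U -> open V -> U !=set0 -> V !=set0 ->
  forall B : set nat, SIP_set B -> return_times T U V `&` B !=set0.

Definition prod_map (I : Type) (X : I -> Type) (T : forall i, X i -> X i)
  : prod_topology X -> prod_topology X :=
  fun x i => T i (x i).

(* Main.v *)
Require Import Defs.
From HB Require Import structures.
From mathcomp Require Import all_boot all_order all_algebra.
From mathcomp Require Import all_classical all_reals all_analysis.
From mathcomp Require Import zify ring lra.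
Import Order.TTheory GRing.Theory Num.Theory.
Local Open Scope classical_set_scope.
Definition sumL (L : seq nat) : nat := \sum_(a <- L) a.

Lemma sumL_cons x L : sumL (x :: L) = x + sumL L.
Proof. by rewrite /sumL big_cons. Qed.

Lemma sumL_cat L1 L2 : sumL (L1 ++ L2) = sumL L1 + sumL L2.
Proof. by rewrite /sumL big_cat. Qed.

Lemma sumL_rem {x L} : x \in L -> sumL L = x + sumL (rem x L).
Proof. by move=> xL; rewrite /sumL (perm_big _ (perm_to_rem xL)) big_cons. Qed.

Lemma sum_sub_le (L S : seq nat) : uniq L -> {subset L <= S} -> sumL L <= sumL S.
Proof.
elim: L S => [|x L IH] S /=; first by rewrite /sumL big_nil.
move=> /andP[xL uL] sub.
have xS : x \in S by apply: sub; rewrite inE eqxx.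
rewrite sumL_cons (sumL_rem xS) leq_add2l.
apply: IH => // y yL; have yx : y != x by apply: contraNneq xL => <-.
by apply: rem_mem => //; apply: sub; rewrite inE yL orbT.
Qed.

Lemma mem_le_sumL {x L} : x \in L -> x <= sumL L.
Proof. by move=> xL; rewrite (sumL_rem xL) leq_addr. Qed.

Lemma cancel_lists {F G : seq nat} : uniq F -> uniq G ->
  exists F' G', [/\ uniq (F' ++ G'), {subset F' <= F}, {subset G' <= G} &
    ((sumL F)%:Z - (sumL G)%:Z = (sumL F')%:Z - (sumL G')%:Z)%R].
Proof.
elim: F G => [|x F IH] G uF uG.
  exists [::], G; split => //; by rewrite /= cat0s.
move: uF => /= /andP[xF uF].
case xG : (x \in G).
  have [F' [G' [u sF sG e]]] := IH (rem x G) uF (rem_uniq x uG).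
  exists F', G'; split => //.
    by move=> y /sF yF; rewrite inE yF orbT.
    by move=> y /sG /mem_rem.
  rewrite -e sumL_cons (sumL_rem xG) !PoszD; ring.
have [F' [G' [u sF sG e]]] := IH G uF uG.
exists (x :: F'), G'; split => //.
- rewrite cat_cons /= u andbT mem_cat negb_or; apply/andP; split.
    by apply: contra xF => /sF.
  by apply: contra (negbT xG) => /sG.
- by move=> y; rewrite !inE => /orP[->//|/sF ->]; rewrite orbT.
- by rewrite !sumL_cons !PoszD -!addrA e.
Qed.

Lemma SIP_dec {A : set nat} {z} : SIP A z -> exists F G,
  [/\ uniq (F ++ G), (forall a, a \in F ++ G -> A a) &
      z = ((sumL F)%:Z - (sumL G)%:Z)%R].
Proof.
move=> [a [b [[F1 [u1 h1 ->]] [G1 [u2 h2 ->]] ->]]].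
have [F [G [u sF sG e]]] := cancel_lists u1 u2.
exists F, G; split => //.
by move=> y; rewrite mem_cat => /orP[/sF/h1|/sG/h2].
Qed.

Lemma IP_intro (A : set nat) L : uniq L -> (forall a, a \in L -> A a) -> IP A (Posz (sumL L)).
Proof. by move=> u h; exists L. Qed.

Lemma sum_flat (H : nat -> seq nat) (K : seq nat) :
  sumL (flatten (map H K)) = \sum_(b <- K) sumL (H b).
Proof. by rewrite /sumL big_flatten big_map. Qed.
Lemma unbounded {A : set nat} : infinite_set A -> forall N, exists a, A a /\ N < a.
Proof.
move=> infA N.
have [B BA szB] := infinite_set_fset N.+2 infA.
apply: contrapT => hn.
have hle : {subset finmap.enum_fset B <= iota 0 N.+1}.
  move=> x xB; rewrite mem_iota /= add0n ltnS leqNgt.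
  apply/negP => Nx; apply: hn; exists x; split => //; exact: BA.
have := uniq_leq_size (finmap.fset_uniq B) hle.
by rewrite size_iota => h; move: (leq_trans szB h); rewrite ltnn.
Qed.

Lemma idx_bound (f : nat -> nat) (L : seq nat) :
  (forall x, x \in L -> exists j, x = f j) ->
  exists N, forall x, x \in L -> exists j, j < N /\ x = f j.
Proof.
elim: L => [|y L IH] h; first by exists 0.
have [N HN] : exists N, forall x, x \in L -> exists j, j < N /\ x = f j.
  by apply: IH => x xL; apply: h; rewrite inE xL orbT.
have [j ->] := h y (mem_head _ _).
exists (maxn N j.+1) => x; rewrite inE => /orP[/eqP->|/HN [i [iN ->]]].
  by exists j; split => //; rewrite leq_max leqnn orbT.
by exists i; split => //; rewrite leq_max iN.
Qed.

Lemma range_inj_infinite (f : nat -> nat) : injective f -> infinite_set (range f).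
Proof.
move=> finj fin.
have [x [K infK HK]] := finite_range_cst_subsequence fin.
have [k1 Kk1] := infinite_setN0 infK.
have : infinite_set (K `\` [set k1]) by apply: infinite_setD => //; exact: finite_set1.
move=> /infinite_setN0 [k2 [Kk2 /= k21]].
apply: k21; apply: finj; by rewrite (proj1 (HK k1) Kk1) (proj1 (HK k2) Kk2).
Qed.

Section Lac.
Variables (A : set nat) (M : nat) (g : nat -> nat).
Hypothesis hg : forall N, A (g N) /\ N < g N.

Fixpoint Sl n := if n is n'.+1 then Sl n' + g (M + Sl n') else 0.
Definition al n := g (M + Sl n).

Lemma al_gt n : M + Sl n < al n.
Proof. exact: (hg _).2. Qed.

Lemma Sl_map N : sumL (map al (iota 0 N)) = Sl N.
Proof.
elim: N => [|N IH]; first by rewrite /sumL big_nil.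
by rewrite -addn1 iotaD map_cat sumL_cat IH /= add0n sumL_cons /sumL big_nil addn0 addn1.
Qed.

Lemma al_inc n : al n < al n.+1.
Proof. have := al_gt n.+1; rewrite /= /al; lia. Qed.

Lemma al_lt {i j} : i < j -> al i < al j.
Proof.
elim: j => // j IH; rewrite ltnS leq_eqVlt => /orP[/eqP->|/IH h].
  exact: al_inc.
exact: ltn_trans h (al_inc j).
Qed.

Lemma al_inj : injective al.
Proof.
move=> i j e; case: (ltngtP i j) => // h.
  by have := al_lt h; rewrite e ltnn.
by have := al_lt h; rewrite e ltnn.
Qed.

Lemma lac_key N F G : uniq (F ++ G) ->
  (forall x, x \in F ++ G -> exists j, j < N /\ x = al j) ->
  sumL G < sumL F -> M + sumL G < sumL F.
Proof.
elim: N F G => [|N IH] F G u h lt.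
  case: F h lt u => [|y F] h lt u; first by rewrite /sumL big_nil in lt.
  by have [j [] ] := h y (mem_head _ _).
set x := al N.
have hsub : forall L, uniq L -> (forall y, y \in L -> y \in F ++ G /\ y != x) ->
    sumL L <= Sl N.
  move=> L uL hL; rewrite -Sl_map; apply: sum_sub_le => // y yL.
  have [yFG yx] := hL y yL.
  have [j [jN ey]] := h y yFG.
  rewrite ey map_f // mem_iota /= add0n.
  move: jN; rewrite ltnS leq_eqVlt => /orP[/eqP ej|//].
  by move: yx; rewrite ey ej eqxx.
have uF : uniq F by move: u; rewrite cat_uniq => /and3P[].
have uG : uniq G by move: u; rewrite cat_uniq => /and3P[].
have dFG : forall y, y \in F -> y \in G -> False.
  move=> y yF yG; move: u; rewrite cat_uniq => /and3P[_ /hasPn/(_ y yG) + _].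
  by rewrite yF.
case xF : (x \in F).
  rewrite (sumL_rem xF).
  have : sumL (rem x F ++ G) <= Sl N.
    apply: hsub.
      rewrite cat_uniq rem_uniq //= uG andbT; apply/hasPn => y yG.
      by apply/negP => /mem_rem yF; exact: dFG yF yG.
    move=> y; rewrite mem_cat => /orP[yr|yG].
      split; first by rewrite mem_cat (mem_rem yr).
      by move: yr; rewrite (mem_rem_uniq _ uF) /= => /andP[].
    split; first by rewrite mem_cat yG orbT.
    by apply/negP => /eqP eyx; apply: (dFG y) => //; rewrite eyx.
  rewrite sumL_cat; have := al_gt N; rewrite -/x; lia.
case xG : (x \in G).
  have : sumL F <= Sl N.
    apply: hsub => // y yF; split; first by rewrite mem_cat yF.
    by apply/negP => /eqP eyx; move: xF; rewrite -eyx yF.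
  have := mem_le_sumL xG; have := al_gt N; rewrite -/x; lia.
apply: IH => // y yFG.
have [j [jN ey]] := h y yFG.
exists j; split => //.
move: jN; rewrite ltnS leq_eqVlt => /orP[/eqP ej|//].
by move: yFG; rewrite ey ej -/x mem_cat xF xG.
Qed.

End Lac.

Lemma lacunary {A : set nat} : infinite_set A -> forall M, exists A',
  [/\ infinite_set A', A' `<=` A, (forall a, A' a -> M < a) &
      forall n : nat, 0 < n -> SIP A' (Posz n) -> M < n].
Proof.
move=> infA M.
have [g hg] : exists g : nat -> nat, forall N, A (g N) /\ N < g N.
  have [g hg] := choice (@unbounded A infA); by exists g.
exists (range (al M g)); split.
- exact: range_inj_infinite (@al_inj A M g hg).
- by move=> _ [j _ <-]; exact: (hg _).1.
- by move=> _ [j _ <-]; have := @al_gt A M g hg j; lia.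
move=> n n0 /SIP_dec [F [G [u hA e]]].
have [N HN] : exists N, forall x, x \in F ++ G -> exists j, j < N /\ x = al M g j.
  apply: idx_bound => x /hA [j _ <-]; by exists j.
have lt : sumL G < sumL F.
  have : (0 < (sumL F)%:Z - (sumL G)%:Z)%R by rewrite -e ltz_nat.
  by rewrite subr_gt0 ltz_nat.
have := @lac_key A M g hg N F G u HN lt.
move: e => /eqP; rewrite eq_sym subr_eq -PoszD => /eqP [] ->; lia.
Qed.
Lemma inc_lt {f : nat -> nat} : (forall n, f n < f n.+1) -> forall i j, i < j -> f i < f j.
Proof.
move=> h i; elim => // j IH; rewrite ltnS leq_eqVlt => /orP[/eqP->|/IH hij].
  exact: h.
exact: ltn_trans hij (h j).
Qed.

Lemma inc_inj (f : nat -> nat) : (forall n, f n < f n.+1) -> injective f.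
Proof.
move=> h i j e; case: (ltngtP i j) => // hij.
  by have := inc_lt h _ _ hij; rewrite e ltnn.
by have := inc_lt h _ _ hij; rewrite e ltnn.
Qed.

Lemma mono_le {f : nat -> nat} : (forall n, f n <= f n.+1) -> forall i j, i <= j -> f i <= f j.
Proof.
move=> h i; elim => [|j IH]; first by rewrite leqn0 => /eqP->.
rewrite leq_eqVlt => /orP[/eqP->//|]; rewrite ltnS => /IH hij.
exact: leq_trans hij (h j).
Qed.

Lemma uniq_blocks (lo hi : nat -> nat) (H : nat -> seq nat) (K : seq nat) :
  (forall b b', b < b' -> hi b <= lo b') -> uniq K ->
  (forall b, b \in K -> uniq (H b) /\ forall a, a \in H b -> lo b < a <= hi b) ->
  uniq (flatten (map H K)).
Proof.
move=> hlh; elim: K => [|b K IH] //= /andP[bK uK] hK.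
rewrite cat_uniq; apply/and3P; split.
- by have [] := hK b (mem_head _ _).
- apply/hasPn => a /flatten_mapP [b' b'K ab']; apply/negP => ab.
  have [_ h1] := hK b (mem_head _ _).
  have b'K' : b' \in b :: K by rewrite inE b'K orbT.
  have [_ h2] := hK b' b'K'.
  have /andP[l1 u1] := h1 a ab; have /andP[l2 u2] := h2 a ab'.
  case: (ltngtP b b') => hbb.
  + have := hlh _ _ hbb; lia.
  + have := hlh _ _ hbb; lia.
  + by move: bK; rewrite hbb b'K.
- by apply: IH => // b' b'K; apply: hK; rewrite inE b'K orbT.
Qed.

Definition Phi (C : set nat) := forall k (B : set nat), SIP_set B -> exists s, B s /\ C (s + k).

Lemma SIP_single (A : set nat) a : A a -> SIP A (Posz a).
Proof.
move=> Aa; exists (Posz a), 0%R; split.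
- by have := @IP_intro A [:: a] erefl; rewrite /sumL big_seq1; apply => y; rewrite inE => /eqP->.
- by have := @IP_intro A [::] erefl; rewrite /sumL big_nil; apply.
- by rewrite GRing.subr0.
Qed.

Lemma SIP_set_ex B : SIP_set B -> exists s, B s.
Proof.
move=> [Bpos [A [infA Apos hA]]].
have [a Aa] := infinite_setN0 infA.
by exists a; apply: hA; [exact: Apos | exact: SIP_single].
Qed.

Lemma Phi_T : Phi setT.
Proof. by move=> k B /SIP_set_ex [s Bs]; exists s. Qed.

Lemma Phi_sub {C C'} : Phi C -> C `<=` C' -> Phi C'.
Proof. by move=> h sub k B sB; have [s [Bs Cs]] := h k B sB; exists s; split => //; apply: sub. Qed.

Lemma iter_open (Y : topologicalType) (T : Y -> Y) : continuous T ->
  forall n (A : set Y), open A -> open (iter n T @^-1` A).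
Proof.
move=> cT; elim => [|n IH] A oA //.
have oA' : open (T @^-1` A) by move/continuousP: cT; apply.
exact: (IH _ oA').
Qed.

Lemma iter_cancel (Y : Type) (T S : Y -> Y) : cancel T S -> cancel S T ->
  forall n y, iter n T (iter n S y) = y.
Proof.
move=> TS ST; elim => // n IH y.
by rewrite (iterS n S) iterSr ST IH.
Qed.
Fixpoint stseq (Y : Type) (T : Y -> Y) (f : set Y * nat -> nat * seq nat * seq nat)
  (W : set Y) (t0 : nat) (n : nat) : set Y * nat :=
  match n with
  | 0 => (W, t0)
  | n'.+1 => let s := stseq Y T f W t0 n' in let r := f s in
      (s.1 `&` iter r.1.1 T @^-1` s.1, r.1.1 + sumL (r.1.2 ++ r.2))
  end.

Lemma core0 (Y : topologicalType) (T : Y -> Y) : continuous T -> mild_mixing T ->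
  forall C, Phi C -> forall U V : set Y, open U -> open V -> U !=set0 -> V !=set0 ->
  forall B, SIP_set B -> exists n, [/\ B n, C n & return_times T U V n].
Proof.
move=> cT mm C phiC U V oU oV U0 V0 B sB.
have [Bpos [A0 [infA0 A0pos hA0]]] := sB.
have sB0 : SIP_set [set n | 0 < n /\ SIP A0 (Posz n)].
  split; first by move=> n [].
  by exists A0; split => // n n0 h; split.
have [k [[k0 [y [[x0 x0U ex0] yV]]] [_ sk]]] := mm U V oU oV U0 V0 _ sB0.
have [F0 [G0 [u0 hF0 e0]]] := SIP_dec sk.
pose W := U `&` iter k T @^-1` V.
have oW : open W by apply: openI => //; exact: iter_open.
have W0 : W !=set0 by exists x0; split => //; rewrite /= ex0.
pose stepP (Wt : set Y * nat) (r : nat * seq nat * seq nat) : Prop :=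
  open Wt.1 -> Wt.1 !=set0 ->
  [/\ Wt.2 < r.1.1, uniq (r.1.2 ++ r.2),
      (forall a, a \in r.1.2 ++ r.2 -> A0 a /\ Wt.2 < a),
      Posz r.1.1 = ((sumL r.1.2)%:Z - (sumL r.2)%:Z)%R &
      return_times T Wt.1 Wt.1 r.1.1].
have hstep : forall Wt, exists r, stepP Wt r.
  move=> [W' t].
  have [[oW' W'0]|nh] := pselect (open W' /\ W' !=set0); last first.
    by exists (0, [::], [::]) => /= o n; exfalso; apply: nh.
  have [A' [infA' A'A A'gt A'sip]] := lacunary infA0 t.
  have sB' : SIP_set [set n | 0 < n /\ SIP A' (Posz n)].
    split; first by move=> n [].
    exists A'; split; [done | by move=> a /A'gt ta; rewrite /=; lia | by move=> n n0 h; split].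
  have [p [rp [p0 sp]]] := mm W' W' oW' oW' W'0 W'0 _ sB'.
  have [F [G [u hA e]]] := SIP_dec sp.
  exists (p, F, G) => _ _ /=; split => //.
  - exact: A'sip.
  - by move=> a /hA Aa; split; [exact: A'A | exact: A'gt].
have [f hf] := choice hstep.
pose st := stseq _ T f W (sumL (F0 ++ G0)).
pose p j := (f (st j)).1.1.
pose FF j := (f (st j)).1.2.
pose GG j := (f (st j)).2.
pose t j := (st j).2.
have inv1 : forall j, open (st j).1 /\ (st j).1 !=set0.
  elim => [|j [oj nj]]; first by split.
  have [_ _ _ _ [_ [z [[w wj ew] zj]]]] := hf (st j) oj nj.
  split; first by apply: openI => //; exact: iter_open.
  by exists w; split => //; rewrite /= ew.
have spec j := hf (st j) (inv1 j).1 (inv1 j).2.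
have tS j : t j.+1 = p j + sumL (FF j ++ GG j) by [].
have ptS j : p j < p j.+1.
  have [h1 _ _ _ _] := spec j.+1; have [h2 _ _ _ _] := spec j.
  move: h1; rewrite -/(t j.+1) -/(p j.+1) tS; lia.
have hrec : forall j (I : seq nat), uniq I -> (forall i, i \in I -> i < j) ->
    forall x, (st j).1 x -> W (iter (\sum_(i <- I) p i) T x).
  elim => [|j IH] I uI hI x.
    case: I uI hI => [|i I] uI hI; first by rewrite big_nil.
    by have := hI i (mem_head _ _).
  move=> [xj xp].
  case jI : (j \in I).
    rewrite (perm_big _ (perm_to_rem jI)) big_cons /= addnC iterD.
    apply: IH => //; first exact: rem_uniq.
    move=> i ir; have := hI i (mem_rem ir).
    rewrite ltnS leq_eqVlt => /orP[/eqP eij|//].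
    by move: ir; rewrite (mem_rem_uniq _ uI) !inE eij eqxx.
  apply: IH => // i iI; have := hI i iI.
  rewrite ltnS leq_eqVlt => /orP[/eqP eij|//].
  by move: jI; rewrite -eij iI.
pose A' := range p.
have sB' : SIP_set [set s | 0 < s /\ SIP A' (Posz s)].
  split; first by move=> n [].
  exists A'; split; [exact: (@range_inj_infinite p (@inc_inj p ptS)) | | by move=> n n0 h; split].
  by move=> _ [j _ <-]; have [h _ _ _ _] := spec j; exact: leq_ltn_trans (leq0n _) h.
have [s [[s0 ss] Cs]] := phiC k _ sB'.
have [L1 [L2 [uL hL es]]] := SIP_dec ss.
have [idx hidx] : exists idx : nat -> nat, forall v, A' v -> p (idx v) = v.
  have h : forall v, exists j, A' v -> p j = v.
    move=> v; have [[j _ <-]|nA] := pselect (A' v); first by exists j.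
    by exists 0 => /nA.
  by have [idx hidx] := choice h; exists idx.
have hL1 : forall v, v \in L1 -> A' v by move=> v vL; apply: hL; rewrite mem_cat vL.
have hL2 : forall v, v \in L2 -> A' v by move=> v vL; apply: hL; rewrite mem_cat vL orbT.
pose I1 := map idx L1.
pose I2 := map idx L2.
have sum1 : sumL L1 = \sum_(j <- I1) p j.
  by rewrite /sumL big_map; apply: eq_big_seq => v vL; rewrite hidx //; exact: hL1.
have sum2 : sumL L2 = \sum_(j <- I2) p j.
  by rewrite /sumL big_map; apply: eq_big_seq => v vL; rewrite hidx //; exact: hL2.
have uI : uniq (I1 ++ I2).
  rewrite -map_cat map_inj_in_uniq // => v w vL wL e.
  by rewrite -(hidx v (hL _ vL)) e hidx //; exact: hL.
have uI1 : uniq I1 by move: uI; rewrite cat_uniq => /and3P[].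
have uI2 : uniq I2 by move: uI; rewrite cat_uniq => /and3P[].
have dis : forall j, j \in I1 -> j \in I2 -> False.
  move=> j j1 j2; move: uI; rewrite cat_uniq => /and3P[_ /hasPn/(_ j j2) + _].
  by rewrite j1.
pose c := \sum_(j <- I1) p j.
pose d := \sum_(j <- I2) p j.
have es' : sumL L1 = s + sumL L2.
  by move: es => /eqP; rewrite eq_sym subr_eq -PoszD => /eqP [].
pose N := (sumL (I1 ++ I2)).+1.
have hN : forall i, i \in I1 ++ I2 -> i < N by move=> i /mem_le_sumL; rewrite ltnS.
have [x xN] := (inv1 N).2.
have hc : W (iter c T x).
  apply: (hrec N I1 uI1 _ x xN).
  move=> i0 iI; apply: hN; rewrite mem_cat iI //.
have hd : W (iter d T x).
  apply: (hrec N I2 uI2 _ x xN).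
  move=> i0 iI; apply: hN; rewrite mem_cat iI orbT //.
have ecd : c = s + d by rewrite /c /d -sum1 -sum2.
have rn : return_times T U V (s + k).
  split; first by rewrite addn_gt0 s0.
  exists (iter (s + k) T (iter d T x)); split.
    by exists (iter d T x) => //; exact: hd.1.
  rewrite -iterD (_ : s + k + d = k + c); last by rewrite ecd; lia.
  rewrite iterD; exact: hc.2.
pose FF' b := if b is j.+1 then FF j else F0.
pose GG' b := if b is j.+1 then GG j else G0.
pose lo b := if b is j.+1 then t j else 0.
have tinc : forall j, t j < t j.+1.
  move=> j; have [h _ _ _ _] := spec j; rewrite tS; exact: leq_trans h (leq_addr _ _).
have hlh : forall b b', b < b' -> t b <= lo b'.
  move=> b [//|b'] /= hb; apply: mono_le => // n; exact: ltnW (tinc n).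
have hblk : forall b, uniq (FF' b ++ GG' b) /\
    forall a, a \in FF' b ++ GG' b -> A0 a /\ lo b < a <= t b.
  case => [|j] /=.
    split => // a aFG; split; first exact: hF0.
    by apply/andP; split; [exact: A0pos (hF0 a aFG) | exact: mem_le_sumL aFG].
  have [_ u hA _ _] := spec j; split => // a aFG.
  have [A0a ta] := hA a aFG; split => //; apply/andP; split => //.
  rewrite tS; exact: leq_trans (mem_le_sumL aFG) (leq_addl _ _).
pose K := 0 :: map succn I1 ++ map succn I2.
pose HP b := if b \in map succn I2 then GG' b else FF' b.
pose HN b := if b \in map succn I2 then FF' b else GG' b.
have uK : uniq K.
  rewrite /K cons_uniq -map_cat (map_inj_uniq succn_inj) uI andbT.
  by apply/negP => /mapP [].
have hHP : forall b, b \in K -> uniq (HP b) /\ (forall a, a \in HP b -> lo b < a <= t b) /\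
    (forall a, a \in HP b -> A0 a).
  move=> b _; have [u hA] := hblk b; move: u; rewrite cat_uniq => /and3P[uF _ uG].
  rewrite /HP; case: ifP => _; (split; [done | split]) => a aH.
  - by have [] := hA a ltac:(by rewrite mem_cat aH orbT).
  - by have [] := hA a ltac:(by rewrite mem_cat aH orbT).
  - by have [] := hA a ltac:(by rewrite mem_cat aH).
  - by have [] := hA a ltac:(by rewrite mem_cat aH).
have hHN : forall b, b \in K -> uniq (HN b) /\ (forall a, a \in HN b -> lo b < a <= t b) /\
    (forall a, a \in HN b -> A0 a).
  move=> b _; have [u hA] := hblk b; move: u; rewrite cat_uniq => /and3P[uF _ uG].
  rewrite /HN; case: ifP => _; (split; [done | split]) => a aH.
  - by have [] := hA a ltac:(by rewrite mem_cat aH).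
  - by have [] := hA a ltac:(by rewrite mem_cat aH).
  - by have [] := hA a ltac:(by rewrite mem_cat aH orbT).
  - by have [] := hA a ltac:(by rewrite mem_cat aH orbT).
pose Pos := flatten (map HP K).
pose Neg := flatten (map HN K).
have uPos : uniq Pos.
  apply: (@uniq_blocks lo t HP K hlh uK) => b bK; have [? [? _]] := hHP b bK; by split.
have uNeg : uniq Neg.
  apply: (@uniq_blocks lo t HN K hlh uK) => b bK; have [? [? _]] := hHN b bK; by split.
have aPos : forall a, a \in Pos -> A0 a.
  by move=> a /flatten_mapP [b bK aH]; have [_ [_ ]] := hHP b bK; apply.
have aNeg : forall a, a \in Neg -> A0 a.
  by move=> a /flatten_mapP [b bK aH]; have [_ [_ ]] := hHN b bK; apply.
have n0I2 : (0 \in map succn I2) = false by apply/negP => /mapP [].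
have nI1 : forall j, j \in I1 -> (j.+1 \in map succn I2) = false.
  move=> j jI; apply/negP => /mapP [i iI /succn_inj eji].
  by apply: (dis j) => //; rewrite eji.
have nI2 : forall j, j \in I2 -> (j.+1 \in map succn I2) = true.
  by move=> j jI; rewrite map_f.
have sPos : sumL Pos = sumL F0 + \sum_(j <- I1) sumL (FF j) + \sum_(j <- I2) sumL (GG j).
  rewrite /Pos sum_flat /K big_cons big_cat !(big_map succn) /= addnA.
  rewrite {1}/HP n0I2.
  congr (_ + _ + _).
  - by apply: eq_big_seq => j jI; rewrite /HP nI1.
  - by apply: eq_big_seq => j jI; rewrite /HP nI2.
have sNeg : sumL Neg = sumL G0 + \sum_(j <- I1) sumL (GG j) + \sum_(j <- I2) sumL (FF j).
  rewrite /Neg sum_flat /K big_cons big_cat !(big_map succn) /= addnA.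
  rewrite {1}/HN n0I2.
  congr (_ + _ + _).
  - by apply: eq_big_seq => j jI; rewrite /HN nI1.
  - by apply: eq_big_seq => j jI; rewrite /HN nI2.
have hp : forall j, sumL (FF j) = p j + sumL (GG j).
  move=> j; have [_ _ _ e _] := spec j.
  by move: e => /eqP; rewrite eq_sym subr_eq -PoszD => /eqP [].
have hk : sumL F0 = k + sumL G0.
  by move: e0 => /eqP; rewrite eq_sym subr_eq -PoszD => /eqP [].
have s1 : \sum_(j <- I1) sumL (FF j) = c + \sum_(j <- I1) sumL (GG j).
  by rewrite /c -big_split /=; apply: eq_bigr => j _; rewrite hp.
have s2 : \sum_(j <- I2) sumL (FF j) = d + \sum_(j <- I2) sumL (GG j).
  by rewrite /d -big_split /=; apply: eq_bigr => j _; rewrite hp.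
have hEq : s + k + sumL Neg = sumL Pos.
  rewrite sPos sNeg s1 s2 hk ecd; lia.
have sipn : SIP A0 (Posz (s + k)).
  exists (Posz (sumL Pos)), (Posz (sumL Neg)); split.
  - exact: IP_intro.
  - exact: IP_intro.
  - by rewrite -hEq [Posz (s + k + _)]PoszD addrK.
exists (s + k); split => //.
apply: hA0 => //; by rewrite addn_gt0 s0.
Qed.
Lemma core (Y : topologicalType) (T : Y -> Y) : continuous T ->
  (forall n y, exists z, iter n T z = y) -> mild_mixing T ->
  forall C, Phi C -> forall U V : set Y, open U -> open V -> U !=set0 -> V !=set0 ->
  Phi (C `&` return_times T U V).
Proof.
move=> cT sT mm C phiC U V oU oV U0 V0 k B sB.
pose C' := [set m | C (m + k)].
have phiC' : Phi C'.
  move=> k' B' sB'; have [s [Bs Cs]] := phiC (k' + k) B' sB'.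
  by exists s; split => //; rewrite /C' /= -addnA.
pose V' := iter k T @^-1` V.
have oV' : open V' by exact: iter_open.
have V'0 : V' !=set0.
  have [v Vv] := V0; have [z hz] := sT k v; by exists z; rewrite /V' /= hz.
have [n [Bn C'n [n0 [w [[y yU <-] wV']]]]] := @core0 Y T cT mm C' phiC' U V' oU oV' U0 V'0 B sB.
exists n; split => //; split => //; split; first by rewrite addn_gt0 n0.
exists (iter (n + k) T y); split; first by exists y.
by rewrite addnC iterD.
Qed.
Section Prod.
Variables (I : Type) (X : I -> topologicalType).

Lemma open_list (L : seq (set (prod_topology X))) :
  (forall s, s \in L -> open s) -> open [set f | forall s, s \in L -> s f].
Proof.
elim: L => [|s L IH] h.
  rewrite (_ : [set f | _] = setT); first exact: openT.
  by rewrite predeqE => f; split => // _ s; rewrite in_nil.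
rewrite (_ : [set f | _] = s `&` [set f | forall s', s' \in L -> s' f]).
  apply: openI; first by apply: h; rewrite mem_head.
  by apply: IH => s' s'L; apply: h; rewrite inE s'L orbT.
rewrite predeqE => f; split.
  move=> H; split; first by apply: H; exact: mem_head.
  by move=> s' s'L; apply: H; rewrite inE s'L orbT.
by move=> [sf H] s'; rewrite inE => /orP[/eqP->//|]; exact: H.
Qed.

Lemma prod_basic {U : set (prod_topology X)} {x : prod_topology X} : open U -> U x ->
  exists L : seq (set (prod_topology X)),
  [/\ (forall s, s \in L -> exists (i : I) (M : set (X i)), open M /\ s = [set f | M (f i)]),
      (forall s, s \in L -> s x) & [set f | forall s, s \in L -> s f] `<=` U].
Proof.
move=> oU xU.
have : nbhs x U by apply: open_nbhs_nbhs; split.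
rewrite /nbhs /= /nbhs_of_open /=.
move=> [] P [] [] Q QfinP <- [] VU QVU VUx PU.
have [L Lsub VL] := QfinP _ QVU.
exists (finmap.enum_fset L); split.
- move=> s sL; have := Lsub s sL.
  move/set_mem => [w _ [N oN NM]].
  by exists w, N; split => //; rewrite -NM.
- by move=> s sL; move: VUx; rewrite -VL; apply.
- move=> f hf; apply: PU; exists VU => //.
  rewrite -VL; move=> s sL; exact: (hf s sL).
Qed.

Let I' : eqType := {classic I}.

Lemma dfc (x : prod_topology X) (i : I') : continuous (@dfwith I' X x i : X i -> prod_topology X).
Proof. exact: (@dfwith_continuous I' X x i). Qed.

Lemma prc (i : I') : continuous ((fun f : prod_topology X => f i) : prod_topology X -> X i).
Proof. exact: (@proj_continuous I' X i). Qed.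

Lemma dfwith_id (x : prod_topology X) (i : I') : @dfwith I' X x i (x i) = x.
Proof. by apply: functional_extensionality_dep => j; case: dfwithP. Qed.

Lemma prod_iter (T : forall i, X i -> X i) n (y : prod_topology X) :
  iter n (prod_map T) y = (fun i => iter n (T i) (y i)).
Proof. by elim: n => // n IH; rewrite iterS IH. Qed.

Lemma coords (L : seq (set (prod_topology X))) :
  (forall s, s \in L -> exists (i : I) (M : set (X i)), open M /\ s = [set f | M (f i)]) ->
  exists J : seq I, forall s, s \in L -> exists (i : I) (M : set (X i)),
    [/\ List.In i J, open M & s = [set f | M (f i)]].
Proof.
elim: L => [|s L IH] h; first by exists [::].
have [J HJ] : exists J : seq I, forall s, s \in L -> exists (i : I) (M : set (X i)),
    [/\ List.In i J, open M & s = [set f | M (f i)]].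
  by apply: IH => s' s'L; apply: h; rewrite inE s'L orbT.
have [i [M [oM es]]] := h s (mem_head _ _).
exists (i :: J) => s'; rewrite inE => /orP[/eqP->|s'L].
  by exists i, M; split => //; left.
have [j [N [jJ oN e]]] := HJ s' s'L.
by exists j, N; split => //; right.
Qed.

Theorem prod_mm (T : forall i, X i -> X i) : (forall i, continuous (T i)) ->
  (forall i n y, exists z, iter n (T i) z = y) -> (forall i, mild_mixing (T i)) ->
  mild_mixing (prod_map T : prod_topology X -> prod_topology X).
Proof.
move=> cT sT mm U V oU oV [x xU] [x' xV] B sB.
have [LU [hLU xLU sLU]] := prod_basic oU xU.
have [LV [hLV xLV sLV]] := prod_basic oV xV.
have [J hJ] : exists J : seq I, forall s, s \in LU ++ LV -> exists (i : I) (M : set (X i)),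
    [/\ List.In i J, open M & s = [set f | M (f i)]].
  by apply: coords => s; rewrite mem_cat => /orP[/hLU|/hLV].
pose BU := [set f : prod_topology X | forall s, s \in LU -> s f].
pose BV := [set f : prod_topology X | forall s, s \in LV -> s f].
have oL : forall L : seq (set (prod_topology X)),
    (forall s, s \in L -> exists (i : I) (M : set (X i)), open M /\ s = [set f | M (f i)]) ->
    open [set f : prod_topology X | forall s, s \in L -> s f].
  move=> L hL; apply: open_list => s /hL [i [M [oM ->]]].
  by move/continuousP: (prc i); apply.
have oBU : open BU := oL _ hLU.
have oBV : open BV := oL _ hLV.
pose O (i : I) := [set z : X i | BU (@dfwith I' X x i z)].
pose O' (i : I) := [set z : X i | BV (@dfwith I' X x' i z)].
have oO : forall i, open (O i) by move=> i; move/continuousP: (dfc x i); apply.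
have oO' : forall i, open (O' i) by move=> i; move/continuousP: (dfc x' i); apply.
have O0 : forall i, O i !=set0 by move=> i; exists (x i); rewrite /O /= dfwith_id.
have O'0 : forall i, O' i !=set0 by move=> i; exists (x' i); rewrite /O' /= dfwith_id.
have gen : forall J', Phi [set n | forall i, List.In i J' -> return_times (T i) (O i) (O' i) n].
  elim => [|i J' IH].
    apply: (@Phi_sub setT); first exact: Phi_T.
    by move=> n _ i [].
  apply: (Phi_sub (@core (X i) (T i) (cT i) (sT i) (mm i) _ IH (O i) (O' i) (oO i) (oO' i) (O0 i) (O'0 i))).
  by move=> n [h1 h2] j [<-|jJ]; [exact: h2 | exact: h1 j jJ].
have [n [Bn Cn]] := gen J 0 B sB.
rewrite addn0 in Cn.
have hz : forall i, exists z : X i, List.In i J -> O i z /\ O' i (iter n (T i) z).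
  move=> i; have [iJ|niJ] := pselect (List.In i J); last by exists (x i).
  by have [_ [w [[z zO <-] wO']]] := Cn i iJ; exists z.
pose y : prod_topology X := fun i => proj1_sig (cid (hz i)).
have yP : forall i, List.In i J -> O i (y i) /\ O' i (iter n (T i) (y i)).
  by move=> i; exact: (proj2_sig (cid (hz i))).
exists n; split => //; split; first exact: sB.1 n Bn.
exists (iter n (prod_map T) y); split.
  exists y => //; apply: sLU => s sL.
  have [i [M [iJ oM es]]] := hJ s ltac:(by rewrite mem_cat sL).
  have [Oy _] := yP i iJ.
  have := Oy s sL; rewrite es /= dfwithin; exact.
apply: sLV => s sL; rewrite prod_iter.
have [i [M [iJ oM es]]] := hJ s ltac:(by rewrite mem_cat sL orbT).
have [_ Oy] := yP i iJ.
have := Oy s sL; rewrite es /= dfwithin; exact.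
Qed.

End Prod.

Theorem corollary3p8 (R : realType) (I : Type) (X : I -> metricType R)
    (T : forall i, X i -> X i)
    (hcpt : forall i, compact [set: X i])
    (hhom : forall i, homeomorphism (T i))
    (hmm : forall i, mild_mixing (T i)) :
  mild_mixing (prod_map T : prod_topology X -> prod_topology X).
Proof.
apply: (@prod_mm I (fun i => X i : topologicalType) T).
- by move=> i; have [S [_ _ cTi _]] := hhom i.
- move=> i n y; have [S [TS ST _ _]] := hhom i; exists (iter n S y).
  exact: (@iter_cancel (X i) (T i) S TS ST).
- exact: hmm.
Qed.
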